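(* For all GP 2 programs (command sequences) $P$ and $Q$, $$P\ \mathtt{or}\ Q\ \equiv\ \mathtt{if}\ (\mathtt{remove!};\ \{\mathtt{create},\mathtt{null}\};\ \mathtt{zero})\ \mathtt{then}\ P\ \mathtt{else}\ Q,$$ where $\mathtt{remove}$ is a set of rule schemata that delete, respectively, an arbitrary non-loop edge, an arbitrary loop, and an arbitrary isolated node (labels given by list variables, with variants for every combination of marks, so that every edge, every loop and every isolated node of any host graph can be deleted by some schema in the set); $\mathtt{null}$ is the rule schema $\emptyset\Rightarrow\emptyset$; $\mathtt{create}$ is the rule schema $\emptyset\Rightarrow$ (a single unmarked node labelled $0$); and $\mathtt{zero}$ is the rule schema that matches a single unmarked node labelled $0$ and leaves it unchanged.
   Context: Host graphs are finite directed graphs (parallel edges and loops allowed) whose nodes and edges carry labels in $\mathcal{L}=(\mathbb{Z}\cup\mathrm{Char}^* )^*\times\{\mathrm{true},\mathrm{false}\}$ (a list of integers and strings together with a ''mark'' bit); graphs are considered up to isomorphism. A rule schema application $G\Rightarrow_r H$ consists of finding an injective match of the left graph of $r$ in $G$ (determining the values of the variables so that labels agree, and satisfying the rule's condition), deleting the images of the left-hand items not in the interface subject to the dangling condition (no deleted node may be incident to an undeleted edge), adding the right-hand items not in the interface, and relabelling interface nodes according to the right-hand side. For a set $R$ of rule schemata, $G\Rightarrow_R H$ means $G\Rightarrow_r H$ for some $r\in R$, and $G\not\Rightarrow_R$ means no such $H$ exists. Programs. Command sequences: ComSeq ::= Com {; Com}; Com ::= RuleSetCall | if ComSeq then ComSeq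 [else ComSeq] | try ComSeq then ComSeq [else ComSeq] | ComSeq ! | ComSeq or ComSeq | skip | fail; RuleSetCall ::= a rule schema name or a set $\{r_1,\dots,r_n\}$ ($n\ge 0$) of rule schemata. Operational semantics: a transition relation $\to$ from configurations $\langle P,G\rangle$ to configurations $\langle P',H\rangle$, graphs $H$, or fail, generated by the rules (with $R$ a rule set call, $C,P,P',Q$ command sequences, $G,H$ host graphs, $\to^+$ the transitive closure): [call1] $G\Rightarrow_R H$ implies $\langle R,G\rangle\to H$; [call2] $G\not\Rightarrow_R$ implies $\langle R,G\rangle\to\mathrm{fail}$; [seq1] $\langle P,G\rangle\to\langle P',H\rangle$ implies $\langle P;Q,G\rangle\to\langle P';Q,H\rangle$; [seq2] $\langle P,G\rangle\to H$ implies $\langle P;Q,G\rangle\to\langle Q,H\rangle$; [seq3] $\langle P,G\rangle\to\mathrm{fail}$ implies $\langle P;Q,G\rangle\to\mathrm{fail}$; [if1] $\langle C,G\rangle\to^+H$ implies $\langle \mathtt{if}\ C\ \mathtt{then}\ P\ \mathtt{else}\ Q,G\rangle\to\langle P,G\rangle$; [if2] $\langle C,G\rangle\to^+\mathrm{fail}$ implies $\langle \mathtt{if}\ C\ \mathtt{then}\ P\ \mathtt{else}\ Q,G\rangle\to\langle Q,G\rangle$; [try1] $\langle C,G\rangle\to^+H$ implies $\langle \mathtt{try}\ C\ \mathtt{then}\ P\ \mathtt{else}\ Q,G\rangle\to\langle P,H\rangle$; [try2] $\langle C,G\rangle\to^+\mathrm{fail}$ implies $\langle \mathtt{try}\ C\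 \mathtt{then}\ P\ \mathtt{else}\ Q,G\rangle\to\langle Q,G\rangle$; [alap1] $\langle P,G\rangle\to^+H$ implies $\langle P!,G\rangle\to\langle P!,H\rangle$; [alap2] $\langle P,G\rangle\to^+\mathrm{fail}$ implies $\langle P!,G\rangle\to G$; [or1] $\langle P\ \mathtt{or}\ Q,G\rangle\to\langle P,G\rangle$; [or2] $\langle P\ \mathtt{or}\ Q,G\rangle\to\langle Q,G\rangle$; [skip] $\langle\mathtt{skip},G\rangle\to G$; [fail] $\langle\mathtt{fail},G\rangle\to\mathrm{fail}$; [if3] $\langle C,G\rangle\to^+H$ implies $\langle\mathtt{if}\ C\ \mathtt{then}\ P,G\rangle\to\langle P,G\rangle$; [if4] $\langle C,G\rangle\to^+\mathrm{fail}$ implies $\langle\mathtt{if}\ C\ \mathtt{then}\ P,G\rangle\to G$; [try3] $\langle C,G\rangle\to^+H$ implies $\langle\mathtt{try}\ C\ \mathtt{then}\ P,G\rangle\to\langle P,H\rangle$; [try4] $\langle C,G\rangle\to^+\mathrm{fail}$ implies $\langle\mathtt{try}\ C\ \mathtt{then}\ P,G\rangle\to G$. A configuration is terminal if it has no successor. $P$ can diverge from $G$ if there is an infinite sequence $\langle P,G\rangle\to\langle P_1,G_1\rangle\to\langle P_2,G_2\rangle\to\cdots$; $P$ can get stuck from $G$ if $\langle P,G\rangle\to^*\langle Q,H\rangle$ for some terminal configuration $\langle Q,H\rangle$. Semantic function: $[\![P]\!]G=\{X\in\mathcal{G}(\mathcal{L})\cup\{\mathrm{fail}\}\mid \langle P,G\rangle\to^+X\}\cup\{\bot\mid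 P\text{ can diverge or get stuck from }G\}$. Programs are semantically equivalent, $P\equiv Q$, if $[\![P]\!]=[\![Q]\!]$. *)

(* Defs.v *)
From Stdlib Require Import Bool ZArith String List Permutation Arith.
Import ListNotations.
Set Implicit Arguments.

(* An atom is an integer or a string; a label is a list of atoms plus a mark bit. *)
Inductive atom : Type := AInt (z : Z) | AStr (s : string).
Definition label : Type := (list atom * bool)%type.

Definition atom_eq_dec : forall a b : atom, {a = b} + {a <> b}.
Proof. decide equality; [apply Z.eq_dec | apply string_dec]. Defined.
Definition label_eq_dec : forall a b : label, {a = b} + {a <> b}.
Proof. decide equality; [apply Bool.bool_dec | apply (list_eq_dec atom_eq_dec)]. Defined.

Definition dlab : label := ([], false).

(* Nodes are 0 .. length nodes - 1 (with their labels); edges are a list of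
   (source, target, label); parallel edges and loops are allowed. *)
Record graph : Type := mkGraph { nodes : list label ; edges : list (nat * nat * label) }.
Definition dedge : nat * nat * label := (0, 0, dlab).

Definition nnodes (G : graph) : nat := length (nodes G).
Definition nedges (G : graph) : nat := length (edges G).
Definition src (e : nat * nat * label) : nat := fst (fst e).
Definition tgt (e : nat * nat * label) : nat := snd (fst e).
Definition elab (e : nat * nat * label) : label := snd e.

Definition host (G : graph) : Prop :=
  Forall (fun e => src e < nnodes G /\ tgt e < nnodes G) (edges G).

Definition map_edge (f : nat -> nat) (e : nat * nat * label) : nat * nat * label :=
  (f (src e), f (tgt e), elab e).

Definition iso (G H : graph) : Prop :=
  nnodes G = nnodes H /\
  exists f : nat -> nat,
    (forall i, i < nnodes G -> f i < nnodes H) /\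
    (forall i j, i < nnodes G -> j < nnodes G -> f i = f j -> i = j) /\
    (forall i, i < nnodes G -> nth (f i) (nodes H) dlab = nth i (nodes G) dlab) /\
    Permutation (map (map_edge f) (edges G)) (edges H).

(* A rule instance: left graph, right graph, and the interface as a list of
   pairs (left node, right node) identified by the interface.  (In GP 2 the
   interface consists of nodes only; all left edges are deleted and all right
   edges are created.)  Labels here are fully instantiated host labels. *)
Record rule : Type := mkRule { lhs : graph ; rhs : graph ; iface : list (nat * nat) }.

Definition rule_wf (r : rule) : Prop :=
  host (lhs r) /\ host (rhs r) /\
  NoDup (map fst (iface r)) /\ NoDup (map snd (iface r)) /\
  Forall (fun p => fst p < nnodes (lhs r) /\ snd p < nnodes (rhs r)) (iface r).

Definition in_iface_l (r : rule) (i : nat) : bool :=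
  existsb (fun p => Nat.eqb (fst p) i) (iface r).
Definition in_iface_r (r : rule) (j : nat) : bool :=
  existsb (fun p => Nat.eqb (snd p) j) (iface r).

Definition is_match (r : rule) (G : graph) (m me : nat -> nat) : Prop :=
  (forall i, i < nnodes (lhs r) -> m i < nnodes G /\
        nth (m i) (nodes G) dlab = nth i (nodes (lhs r)) dlab) /\
  (forall i j, i < nnodes (lhs r) -> j < nnodes (lhs r) -> m i = m j -> i = j) /\
  (forall k, k < nedges (lhs r) -> me k < nedges G /\
        nth (me k) (edges G) dedge = map_edge m (nth k (edges (lhs r)) dedge)) /\
  (forall k l, k < nedges (lhs r) -> l < nedges (lhs r) -> me k = me l -> k = l).

Definition deleted (r : rule) (m : nat -> nat) (v : nat) : bool :=
  existsb (fun i => Nat.eqb (m i) v && negb (in_iface_l r i))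
          (seq 0 (nnodes (lhs r))).

Definition edge_deleted (r : rule) (me : nat -> nat) (k : nat) : bool :=
  existsb (fun l => Nat.eqb (me l) k) (seq 0 (nedges (lhs r))).

Definition dangling_ok (r : rule) (G : graph) (m me : nat -> nat) : Prop :=
  forall k, k < nedges G -> edge_deleted r me k = false ->
    deleted r m (src (nth k (edges G) dedge)) = false /\
    deleted r m (tgt (nth k (edges G) dedge)) = false.

Definition kept (r : rule) (m : nat -> nat) (G : graph) : list nat :=
  filter (fun v => negb (deleted r m v)) (seq 0 (nnodes G)).
Definition newidx (r : rule) (m : nat -> nat) (G : graph) (v : nat) : nat :=
  length (filter (fun w => Nat.ltb w v) (kept r m G)).
Definition relabel (r : rule) (m : nat -> nat) (G : graph) (v : nat) : label :=
  match find (fun p => Nat.eqb (m (fst p)) v) (iface r) with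
  | Some p => nth (snd p) (nodes (rhs r)) dlab
  | None => nth v (nodes G) dlab
  end.
Definition fresh (r : rule) : list nat :=
  filter (fun j => negb (in_iface_r r j)) (seq 0 (nnodes (rhs r))).
Definition ridx (r : rule) (m : nat -> nat) (G : graph) (j : nat) : nat :=
  match find (fun p => Nat.eqb (snd p) j) (iface r) with
  | Some p => newidx r m G (m (fst p))
  | None => length (kept r m G) + length (filter (fun w => Nat.ltb w j) (fresh r))
  end.
Definition kept_edges (r : rule) (me : nat -> nat) (G : graph) : list nat :=
  filter (fun k => negb (edge_deleted r me k)) (seq 0 (nedges G)).

Definition result_graph (r : rule) (m me : nat -> nat) (G : graph) : graph :=
  mkGraph
    (map (relabel r m G) (kept r m G) ++
     map (fun j => nth j (nodes (rhs r)) dlab) (fresh r))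
    (map (fun k => map_edge (newidx r m G) (nth k (edges G) dedge)) (kept_edges r me G) ++
     map (map_edge (ridx r m G)) (edges (rhs r))).

(* A rule schema is given by its admissible instances: [s r G m] holds when
   the instance r (obtained by assigning values to the schema's variables)
   may be applied to host graph G with node match m (the condition of the
   schema may depend on G and m). *)
Definition schema : Type := rule -> graph -> (nat -> nat) -> Prop.

Definition schema_step (s : schema) (G H : graph) : Prop :=
  exists r m me, s r G m /\ rule_wf r /\ is_match r G m me /\
                 dangling_ok r G m me /\ iso (result_graph r m me G) H.

Definition ruleset_step (R : list schema) (G H : graph) : Prop :=
  exists s, In s R /\ schema_step s G H.

Inductive prog : Type :=
  | Call (R : list schema)                 (* rule set call; a name r is [r] *)
  | Seq (P Q : prog)
  | IfTE (C P Q : prog)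
  | IfT (C P : prog)
  | TryTE (C P Q : prog)
  | TryT (C P : prog)
  | Alap (P : prog)
  | Or (P Q : prog)
  | Skip
  | Fail.

Inductive config : Type := Conf (P : prog) (G : graph).
Inductive target : Type :=
  | TConf (c : config) | TGraph (G : graph) | TFail.

Inductive step : config -> target -> Prop :=
  | s_call1 R G H : ruleset_step R G H -> step (Conf (Call R) G) (TGraph H)
  | s_call2 R G : (forall H, ~ ruleset_step R G H) -> step (Conf (Call R) G) TFail
  | s_seq1 P P' Q G H : step (Conf P G) (TConf (Conf P' H)) ->
      step (Conf (Seq P Q) G) (TConf (Conf (Seq P' Q) H))
  | s_seq2 P Q G H : step (Conf P G) (TGraph H) ->
      step (Conf (Seq P Q) G) (TConf (Conf Q H))
  | s_seq3 P Q G : step (Conf P G) TFail -> step (Conf (Seq P Q) G) TFail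
  | s_if1 C P Q G H : plus (Conf C G) (TGraph H) -> step (Conf (IfTE C P Q) G) (TConf (Conf P G))
  | s_if2 C P Q G : plus (Conf C G) TFail -> step (Conf (IfTE C P Q) G) (TConf (Conf Q G))
  | s_try1 C P Q G H : plus (Conf C G) (TGraph H) -> step (Conf (TryTE C P Q) G) (TConf (Conf P H))
  | s_try2 C P Q G : plus (Conf C G) TFail -> step (Conf (TryTE C P Q) G) (TConf (Conf Q G))
  | s_alap1 P G H : plus (Conf P G) (TGraph H) -> step (Conf (Alap P) G) (TConf (Conf (Alap P) H))
  | s_alap2 P G : plus (Conf P G) TFail -> step (Conf (Alap P) G) (TGraph G)
  | s_or1 P Q G : step (Conf (Or P Q) G) (TConf (Conf P G))
  | s_or2 P Q G : step (Conf (Or P Q) G) (TConf (Conf Q G))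
  | s_skip G : step (Conf Skip G) (TGraph G)
  | s_fail G : step (Conf Fail G) TFail
  | s_if3 C P G H : plus (Conf C G) (TGraph H) -> step (Conf (IfT C P) G) (TConf (Conf P G))
  | s_if4 C P G : plus (Conf C G) TFail -> step (Conf (IfT C P) G) (TGraph G)
  | s_try3 C P G H : plus (Conf C G) (TGraph H) -> step (Conf (TryT C P) G) (TConf (Conf P H))
  | s_try4 C P G : plus (Conf C G) TFail -> step (Conf (TryT C P) G) (TGraph G)
with plus : config -> target -> Prop :=
  | p_one c t : step c t -> plus c t
  | p_more c c' t : step c (TConf c') -> plus c' t -> plus c t.

Inductive star : config -> config -> Prop :=
  | st_refl c : star c c
  | st_step c c' c'' : step c (TConf c') -> star c' c'' -> star c c''.

Definition terminal (c : config) : Prop := forall t, ~ step c t.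

Definition can_diverge (P : prog) (G : graph) : Prop :=
  exists f : nat -> config, f 0 = Conf P G /\ forall n, step (f n) (TConf (f (S n))).

Definition can_get_stuck (P : prog) (G : graph) : Prop :=
  exists c, star (Conf P G) c /\ terminal c.

Inductive result : Type := RGraph (H : graph) | RFail | RBot.

Definition sem (P : prog) (G : graph) (X : result) : Prop :=
  match X with
  | RGraph H => plus (Conf P G) (TGraph H)
  | RFail => plus (Conf P G) TFail
  | RBot => can_diverge P G \/ can_get_stuck P G
  end.

Definition res_iso (X Y : result) : Prop :=
  match X, Y with
  | RGraph G, RGraph H => iso G H
  | RFail, RFail => True
  | RBot, RBot => True
  | _, _ => False
  end.

Definition sem_equiv (P Q : prog) : Prop :=
  forall G, host G ->
    (forall X, sem P G X -> exists Y, sem Q G Y /\ res_iso X Y) /\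
    (forall Y, sem Q G Y -> exists X, sem P G X /\ res_iso X Y).

Definition empty_graph : graph := mkGraph [] [].
Definition zero_label : label := ([AInt 0%Z], false).

Definition remove_edge : schema := fun r _ _ =>
  exists a b c : label,
    r = mkRule (mkGraph [a; b] [(0, 1, c)]) (mkGraph [a; b] []) [(0, 0); (1, 1)].
Definition remove_loop : schema := fun r _ _ =>
  exists a c : label,
    r = mkRule (mkGraph [a] [(0, 0, c)]) (mkGraph [a] []) [(0, 0)].
Definition remove_node : schema := fun r _ _ =>
  exists a : label, r = mkRule (mkGraph [a] []) empty_graph [].
Definition remove : list schema := [remove_edge; remove_loop; remove_node].

Definition null : schema := fun r _ _ => r = mkRule empty_graph empty_graph [].
Definition create : schema := fun r _ _ =>
  r = mkRule empty_graph (mkGraph [zero_label] []) [].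
Definition zero : schema := fun r _ _ =>
  r = mkRule (mkGraph [zero_label] []) (mkGraph [zero_label] []) [(0, 0)].

Definition cond_prog : prog :=
  Seq (Alap (Call remove)) (Seq (Call [create; null]) (Call [zero])).

(* Main.v *)
Require Import Defs.
From Stdlib Require Import Bool ZArith String List Permutation Arith Lia.
Import ListNotations.

Lemma iso_refl G : iso G G.
Proof.
  split; [reflexivity|]. exists (fun i => i). repeat split; auto.
  replace (map (map_edge (fun i => i)) (edges G)) with (edges G); [apply Permutation_refl|].
  rewrite <- map_id at 1. apply map_ext. intros [[a b] c]; reflexivity.
Qed.

Lemma filter_le {A} (f : A -> bool) l : length (filter f l) <= length l.
Proof. induction l; simpl; auto; destruct (f a); simpl; lia. Qed.

Lemma filter_lt {A} (f : A -> bool) l x : In x l -> f x = false -> length (filter f l) < length l.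
Proof.
  induction l; simpl; intros Hi Hf; [destruct Hi|].
  destruct Hi as [<-|Hi].
  - rewrite Hf. pose proof (filter_le f l); lia.
  - destruct (f a); simpl; specialize (IHl Hi Hf); lia.
Qed.

Lemma newidx_lt l v : In v l -> length (filter (fun w => w <? v) l) < length l.
Proof.
  intros H; apply filter_lt with v; auto. apply Nat.ltb_irrefl.
Qed.

Lemma result_host r m me G :
  host G -> edges (rhs r) = [] -> dangling_ok r G m me -> host (result_graph r m me G).
Proof.
  intros HG Hr Hd. unfold host, result_graph. simpl. rewrite Hr. simpl.
  rewrite app_nil_r. apply Forall_forall. intros e He.
  apply in_map_iff in He. destruct He as [k [<- Hk]].
  unfold kept_edges in Hk. apply filter_In in Hk. destruct Hk as [Hk Hk2].
  apply in_seq in Hk. apply negb_true_iff in Hk2.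
  destruct (Hd k ltac:(lia) Hk2) as [D1 D2].
  unfold host in HG. rewrite Forall_forall in HG.
  assert (Hin : In (nth k (edges G) dedge) (edges G)) by (apply nth_In; unfold nedges in Hk; lia).
  destruct (HG _ Hin) as [S1 S2].
  unfold nnodes; simpl. rewrite length_app, !length_map.
  unfold map_edge, src, tgt; simpl. unfold src, tgt in *.
  split.
  - assert (In (fst (fst (nth k (edges G) dedge))) (kept r m G)).
    { unfold kept. apply filter_In. split; [apply in_seq; lia| rewrite D1; reflexivity]. }
    unfold newidx. pose proof (newidx_lt _ _ H). lia.
  - assert (In (snd (fst (nth k (edges G) dedge))) (kept r m G)).
    { unfold kept. apply filter_In. split; [apply in_seq; lia| rewrite D2; reflexivity]. }
    unfold newidx. pose proof (newidx_lt _ _ H). lia.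
Qed.

Definition sz (G : graph) := nnodes G + nedges G.

Lemma result_sz r m me G : edges (rhs r) = [] -> fresh r = [] ->
  sz (result_graph r m me G) = length (kept r m G) + length (kept_edges r me G).
Proof.
  intros H1 H2. unfold sz, nnodes, nedges, result_graph; simpl.
  rewrite H1, H2. simpl. rewrite !length_app, !length_map. simpl. lia.
Qed.

Lemma kept_le r m G : length (kept r m G) <= nnodes G.
Proof. unfold kept. rewrite <- (length_seq (nnodes G) 0) at 2. apply filter_le. Qed.
Lemma kept_edges_le r me G : length (kept_edges r me G) <= nedges G.
Proof. unfold kept_edges. rewrite <- (length_seq (nedges G) 0) at 2. apply filter_le. Qed.

Lemma deleted_false r m v : (forall i, i < nnodes (lhs r) -> in_iface_l r i = true) ->
  deleted r m v = false.
Proof.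
  intros H. apply not_true_iff_false. intro E. unfold deleted in E.
  apply existsb_exists in E. destruct E as [i [Hi Hb]]. apply in_seq in Hi.
  rewrite H in Hb by lia. rewrite andb_false_r in Hb. discriminate.
Qed.

Lemma remove_progress G : host G -> 0 < nnodes G ->
  exists H, ruleset_step Defs.remove G H /\ host H /\ sz H < sz G.
Proof.
  intros HG Hn.
  destruct (edges G) as [|[[s t] c] rest] eqn:HE.
  -
    set (r := mkRule (mkGraph [nth 0 (nodes G) dlab] []) empty_graph []).
    set (m := fun _ : nat => 0). set (me := fun _ : nat => 0).
    assert (Hd : dangling_ok r G m me).
    { intros k Hk. unfold nedges in Hk. rewrite HE in Hk. simpl in Hk. lia. }
    exists (result_graph r m me G). split; [|split].
    + exists remove_node. split; [simpl; auto|].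
      exists r, m, me. split; [eexists; reflexivity|]. split; [|split; [|split]].
      * unfold rule_wf, host; simpl. repeat split; repeat constructor.
      * unfold is_match, nnodes, nedges; simpl. split; [|split; [|split]].
        -- intros i Hi. assert (i = 0) by lia. subst. split; [exact Hn|reflexivity].
        -- intros; lia.
        -- intros; lia.
        -- intros; lia.
      * exact Hd.
      * apply iso_refl.
    + apply result_host; auto.
    + rewrite result_sz by reflexivity.
      assert (length (kept r m G) < nnodes G).
      { unfold kept. rewrite <- (length_seq (nnodes G) 0) at 2.
        apply filter_lt with 0. apply in_seq; lia. reflexivity. }
      pose proof (kept_edges_le r me G). unfold sz. lia.
  - unfold host in HG. rewrite HE in HG. inversion HG as [|x l Hst Hrest]; subst.
    unfold src, tgt in Hst; simpl in Hst. destruct Hst as [Hs Ht].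
    assert (Hne : 0 < nedges G) by (unfold nedges; rewrite HE; simpl; lia).
    assert (Hkm : forall me : nat -> nat, (forall l, me l = 0) -> forall r,
       nnodes (lhs r) = 1 \/ nnodes (lhs r) = 2 ->
       nedges (lhs r) = 1 ->
       length (kept_edges r me G) < nedges G).
    { intros me Hme r Hn1 He1. unfold kept_edges. rewrite <- (length_seq (nedges G) 0) at 2.
      apply filter_lt with 0. apply in_seq; lia.
      unfold edge_deleted. rewrite He1. simpl. rewrite Hme. reflexivity. }
    assert (HGh : host G) by (unfold host; rewrite HE; constructor; auto).
    destruct (Nat.eq_dec s t) as [<-|Hst].
    + set (r := mkRule (mkGraph [nth s (nodes G) dlab] [(0,0,c)]) (mkGraph [nth s (nodes G) dlab] []) [(0,0)]).
      set (m := fun _ : nat => s). set (me := fun _ : nat => 0).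
      assert (Hd : dangling_ok r G m me).
      { intros k _ _. rewrite !deleted_false; auto.
        all: intros i Hi; unfold nnodes in Hi; simpl in Hi; destruct i; [reflexivity|lia]. }
      exists (result_graph r m me G). split; [|split].
      * exists remove_loop. split; [simpl; auto|].
        exists r, m, me. split; [do 2 eexists; reflexivity|]. split; [|split; [|split]].
        -- unfold rule_wf, host, nnodes, src, tgt; simpl. repeat split; repeat constructor; simpl.
           all: tauto.
        -- unfold is_match, nnodes, nedges; simpl. split; [|split; [|split]].
           ++ intros i Hi. assert (i = 0) by lia. subst. split; [exact Hs|reflexivity].
           ++ intros; lia.
           ++ intros k Hk. assert (k = 0) by lia. subst. rewrite HE. split; [unfold me; simpl; lia|reflexivity].
           ++ intros; lia.
        -- exact Hd.
        -- apply iso_refl.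
      * apply result_host; auto.
      * rewrite result_sz by reflexivity.
        pose proof (kept_le r m G). pose proof (Hkm me (fun _ => eq_refl) r (or_introl eq_refl) eq_refl).
        unfold sz; lia.
    + set (r := mkRule (mkGraph [nth s (nodes G) dlab; nth t (nodes G) dlab] [(0,1,c)])
                  (mkGraph [nth s (nodes G) dlab; nth t (nodes G) dlab] []) [(0,0);(1,1)]).
      set (m := fun i : nat => match i with 0 => s | _ => t end). set (me := fun _ : nat => 0).
      assert (Hd : dangling_ok r G m me).
      { intros k _ _. rewrite !deleted_false; auto.
        all: intros i Hi; unfold nnodes in Hi; simpl in Hi; destruct i as [|[|i]]; [reflexivity|reflexivity|lia]. }
      exists (result_graph r m me G). split; [|split].
      * exists remove_edge. split; [simpl; auto|].
        exists r, m, me. split; [do 3 eexists; reflexivity|]. split; [|split; [|split]].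
        -- unfold rule_wf, host, nnodes, src, tgt; simpl. repeat split; repeat constructor; simpl; try lia; try tauto.
           all: intros [H|[]]; discriminate.
        -- unfold is_match, nnodes, nedges; simpl. split; [|split; [|split]].
           ++ intros i Hi. destruct i as [|[|i]]; [split; [exact Hs|reflexivity]|split; [exact Ht|reflexivity]|lia].
           ++ intros i j Hi Hj Hij. destruct i as [|[|i]], j as [|[|j]]; simpl in *; try lia.
           ++ intros k Hk. assert (k = 0) by lia. subst. rewrite HE. split; [unfold me; simpl; lia|reflexivity].
           ++ intros; lia.
        -- exact Hd.
        -- apply iso_refl.
      * apply result_host; auto.
      * rewrite result_sz by reflexivity.
        pose proof (kept_le r m G). pose proof (Hkm me (fun _ => eq_refl) r (or_intror eq_refl) eq_refl).
        unfold sz; lia.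
Qed.

Lemma no_match_empty r G m me : nnodes G = 0 -> 0 < nnodes (lhs r) -> ~ is_match r G m me.
Proof. intros H1 H2 [Hm _]. destruct (Hm 0 H2) as [Hl _]. lia. Qed.

Lemma remove_empty_fail H : ~ ruleset_step Defs.remove empty_graph H.
Proof.
  intros [s [Hin [r [m [me [Hs [_ [Hm _]]]]]]]].
  simpl in Hin. destruct Hin as [<-|[<-|[<-|[]]]].
  - destruct Hs as [a [b [c ->]]]. eapply no_match_empty; eauto; unfold nnodes; simpl; lia.
  - destruct Hs as [a [c ->]]. eapply no_match_empty; eauto; unfold nnodes; simpl; lia.
  - destruct Hs as [a ->]. eapply no_match_empty; eauto; unfold nnodes; simpl; lia.
Qed.

Lemma host_empty G : host G -> nnodes G = 0 -> G = empty_graph.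
Proof.
  intros HG Hn. destruct G as [ns es]. unfold nnodes in Hn; simpl in Hn.
  destruct ns; [|simpl in Hn; lia].
  destruct es as [|e es]; [reflexivity|].
  unfold host in HG. inversion HG; subst. unfold nnodes in *; simpl in *. lia.
Qed.

Lemma alap_remove : forall n G, sz G <= n -> host G ->
  plus (Conf (Alap (Call Defs.remove)) G) (TGraph empty_graph).
Proof.
  induction n; intros G Hs HG.
  - assert (nnodes G = 0) by (unfold sz in Hs; lia).
    rewrite (host_empty G HG H). apply p_one, s_alap2, p_one, s_call2, remove_empty_fail.
  - destruct (Nat.eq_dec (nnodes G) 0) as [H0|H0].
    + rewrite (host_empty G HG H0). apply p_one, s_alap2, p_one, s_call2, remove_empty_fail.
    + destruct (remove_progress G HG ltac:(lia)) as [H [Hst [Hh Hlt]]].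
      eapply p_more. eapply s_alap1. apply p_one, s_call1; exact Hst.
      apply IHn; auto; lia.
Qed.

Lemma seq_plus : forall c t, plus c t -> forall P G H Q t',
  c = Conf P G -> t = TGraph H -> plus (Conf Q H) t' -> plus (Conf (Seq P Q) G) t'.
Proof.
  intros c t Hp. induction Hp; intros P0 G0 H0 Q0 t' Ec Et Hq; subst.
  - eapply p_more; [apply s_seq2; eassumption| exact Hq].
  - destruct c' as [P' G']. eapply p_more; [apply s_seq1; eassumption|].
    eapply IHHp; eauto.
Qed.

Definition g1 : graph := mkGraph [zero_label] [].

Lemma create_step : step (Conf (Call [create; null]) empty_graph) (TGraph g1).
Proof.
  apply s_call1. exists create. split; [simpl; auto|].
  exists (mkRule empty_graph (mkGraph [zero_label] []) []), (fun _ => 0), (fun _ => 0).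
  split; [reflexivity|]. split; [|split; [|split]].
  - unfold rule_wf, host; simpl. repeat split; repeat constructor.
  - unfold is_match, nnodes, nedges; simpl. repeat split; intros; lia.
  - intros k Hk. unfold nedges in Hk; simpl in Hk; lia.
  - replace (result_graph _ _ _ _) with g1 by reflexivity. apply iso_refl.
Qed.

Lemma null_step : step (Conf (Call [create; null]) empty_graph) (TGraph empty_graph).
Proof.
  apply s_call1. exists null. split; [simpl; auto|].
  exists (mkRule empty_graph empty_graph []), (fun _ => 0), (fun _ => 0).
  split; [reflexivity|]. split; [|split; [|split]].
  - unfold rule_wf, host; simpl. repeat split; repeat constructor.
  - unfold is_match, nnodes, nedges; simpl. repeat split; intros; lia.
  - intros k Hk. unfold nedges in Hk; simpl in Hk; lia.
  - replace (result_graph _ _ _ _) with empty_graph by reflexivity. apply iso_refl.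
Qed.

Lemma zero_step : exists H, step (Conf (Call [zero]) g1) (TGraph H).
Proof.
  set (r := mkRule (mkGraph [zero_label] []) (mkGraph [zero_label] []) [(0, 0)]).
  eexists. apply s_call1. exists zero. split; [simpl; auto|].
  exists r, (fun _ => 0), (fun _ => 0).
  split; [reflexivity|]. split; [|split; [|split]].
  - unfold rule_wf, host, nnodes; simpl. repeat split; repeat constructor; simpl; try lia; tauto.
  - unfold is_match, nnodes, nedges; simpl. split; [|split; [|split]].
    + intros i Hi. assert (i = 0) by lia. subst. split; [lia|reflexivity].
    + intros; lia.
    + intros; lia.
    + intros; lia.
  - intros k Hk. unfold nedges in Hk; simpl in Hk; lia.
  - apply iso_refl.
Qed.

Lemma zero_fail : step (Conf (Call [zero]) empty_graph) TFail.
Proof.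
  apply s_call2. intros H [s [Hin [r [m [me [Hs [_ [Hm _]]]]]]]].
  simpl in Hin. destruct Hin as [<-|[]]. rewrite Hs in Hm.
  eapply no_match_empty; eauto; unfold nnodes; simpl; lia.
Qed.

Lemma cond_ok G : host G ->
  (exists H, plus (Conf cond_prog G) (TGraph H)) /\ plus (Conf cond_prog G) TFail.
Proof.
  intros HG. pose proof (alap_remove (sz G) G (le_n _) HG) as HA. split.
  - destruct zero_step as [H HZ]. exists H. unfold cond_prog.
    eapply seq_plus; [exact HA|reflexivity|reflexivity|].
    eapply p_more; [apply s_seq2, create_step|]. apply p_one, HZ.
  - unfold cond_prog.
    eapply seq_plus; [exact HA|reflexivity|reflexivity|].
    eapply p_more; [apply s_seq2, null_step|]. apply p_one, zero_fail.
Qed.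

Lemma step_same P Q G : host G -> forall t,
  step (Conf (Or P Q) G) t <-> step (Conf (IfTE cond_prog P Q) G) t.
Proof.
  intros HG t. destruct (cond_ok G HG) as [[H1 HS] HF]. split; intros Hs.
  - inversion Hs; subst; [eapply s_if1; eauto| eapply s_if2; eauto].
  - inversion Hs; subst; [apply s_or1| apply s_or2].
Qed.

Lemma plus_same c1 c2 : (forall t, step c1 t <-> step c2 t) -> forall t, plus c1 t -> plus c2 t.
Proof.
  intros E t Hp. inversion Hp; subst.
  - apply p_one, E; auto.
  - eapply p_more; [apply E; eauto| auto].
Qed.

Lemma bot_same c1 c2 : (forall t, step c1 t <-> step c2 t) -> (~ terminal c1) ->
  forall P1 G1 P2 G2, c1 = Conf P1 G1 -> c2 = Conf P2 G2 ->
  (can_diverge P1 G1 \/ can_get_stuck P1 G1) -> (can_diverge P2 G2 \/ can_get_stuck P2 G2).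
Proof.
  intros E NT P1 G1 P2 G2 -> -> [[f [f0 Hf]]|[c [Hst Ht]]].
  - left. exists (fun n => match n with 0 => Conf P2 G2 | _ => f n end). split; [reflexivity|].
    intros [|n]; [|apply Hf]. apply E. rewrite <- f0. apply Hf.
  - right. inversion Hst; subst.
    + exfalso; apply NT, Ht.
    + exists c. split; auto. eapply st_step; [apply E; eauto| auto].
Qed.

Theorem mainTheorem2 (P Q : prog) :
  sem_equiv (Or P Q) (IfTE cond_prog P Q).
Proof.
  intros G HG. pose proof (step_same P Q G HG) as E.
  assert (E' : forall t, step (Conf (IfTE cond_prog P Q) G) t <-> step (Conf (Or P Q) G) t)
    by (intro t; symmetry; apply E).
  assert (NT1 : ~ terminal (Conf (Or P Q) G)) by (intros T; eapply T; apply s_or1).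
  assert (NT2 : ~ terminal (Conf (IfTE cond_prog P Q) G))
    by (intros T; eapply T; apply E; apply s_or1).
  split.
  - intros X HX. exists X. split; [|destruct X; simpl; auto; apply iso_refl].
    destruct X; simpl in *; try (eapply (plus_same _ _ E); eauto).
    eapply (bot_same _ _ E NT1); eauto.
  - intros X HX. exists X. split; [|destruct X; simpl; auto; apply iso_refl].
    destruct X; simpl in *; try (eapply (plus_same _ _ E'); eauto).
    eapply (bot_same _ _ E' NT2); eauto.
Qed.
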